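(* For any positive integer $r$ the group $H^1(\mathrm{SL}_2^+(\mathbb{Z}/2^r),(\mathbb{Z}/2^r)^2)$ (with tautological action) is annihilated by $2^{r-1}$.
   Context: For $n$ even, $\mathrm{SL}_2^+(\mathbb{Z}/n)$ is the kernel of the composite $\mathrm{SL}_2(\mathbb{Z}/n)\to\mathrm{SL}_2(\mathbb{Z}/2)\cong S_3\to\{\pm1\}$ of reduction modulo $2$ and the signature. *)

(* Defs.v *)
From HB Require Import structures.
From mathcomp Require Import all_boot all_order all_algebra all_fingroup.
Set Implicit Arguments. Unset Strict Implicit. Unset Printing Implicit Defensive.
Import GRing.Theory.
Local Open Scope ring_scope.

(* Reduction modulo 2 of a 2x2 matrix over Z/n (meaningful for n even). *)
Definition red2 (n : nat) (A : 'M['Z_n]_2) : 'M['Z_2]_2 :=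
  \matrix_(i, j) ((nat_of_ord (A i j))%:R : 'Z_2).

Definition nzvec := {v : 'rV['Z_2]_2 | v != 0}.

(* Signature of the permutation of the three nonzero vectors of (Z/2)^2
   induced by B (this realizes SL_2(Z/2) ~= S_3 -> {+-1});
   [true] means odd. *)
Definition sl2_sign (B : 'M['Z_2]_2) : bool :=
  if [pick s : {perm nzvec} | [forall v : nzvec, val (s v) == val v *m B]]
  is Some s then odd_perm s else false.

Definition in_SL2plus (n : nat) (A : 'M['Z_n]_2) : bool :=
  (\det A == 1) && ~~ sl2_sign (red2 A).

Definition cocycle (n : nat) (G : pred 'M['Z_n]_2) (f : 'M['Z_n]_2 -> 'cV['Z_n]_2) :=
  forall A B, G A -> G B -> f (A *m B) = f A + A *m f B.

Definition coboundary (n : nat) (G : pred 'M['Z_n]_2) (f : 'M['Z_n]_2 -> 'cV['Z_n]_2) :=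
  exists m : 'cV['Z_n]_2, forall A, G A -> f A = A *m m - m.

(* Main.v *)
Require Import Defs.
From HB Require Import structures.
From mathcomp Require Import all_boot all_order all_algebra all_fingroup.
Import GRing.Theory.
Local Open Scope ring_scope.

Lemma det2 (R : comNzRingType) (A : 'M[R]_2) :
  \det A = A 0 0 * A 1 1 - A 0 1 * A 1 0.
Proof.
rewrite (expand_det_row _ 0) big_ord_recl big_ord1 /cofactor !det_mx11 !mxE /=.
rewrite /= expr0 expr1 !mul1r mulN1r mulrN.
by congr (A _ _ * A _ _ - A _ _ * A _ _); apply: val_inj.
Qed.

Definition R2 (x y : 'Z_2) : 'rV['Z_2]_2 := \row_j (if j == 0 then x else y).
Definition M4 (a b c d : 'Z_2) : 'M['Z_2]_2 :=
  \matrix_(i, j) (if i == 0 then (if j == 0 then a else b) else (if j == 0 then c else d)).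

Lemma R2M4 x y a b c d : R2 x y *m M4 a b c d = R2 (x*a + y*c) (x*b + y*d).
Proof.
apply/rowP => j; rewrite !mxE big_ord_recl big_ord1 !mxE.
by case: j => [[|[|]]] //=.
Qed.


Lemma zcases (x : 'Z_2) : x = 0 \/ x = 1.
Proof. case: x => [[|[|]]] //= H; [left|right]; exact: val_inj. Qed.

Lemma rowE2 (w : 'rV['Z_2]_2) : w = R2 (w 0 0) (w 0 1).
Proof. apply/rowP => j; rewrite !mxE; case: j => [[|[|]]] //= H; congr (w _ _); exact: val_inj. Qed.

Lemma M4E (A : 'M['Z_2]_2) : A = M4 (A 0 0) (A 0 1) (A 1 0) (A 1 1).
Proof. apply/matrixP => i j; rewrite !mxE; case: i => [[|[|]]] //= Hi; case: j => [[|[|]]] //= Hj;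
  congr (A _ _); exact: val_inj. Qed.

Lemma detM4 a b c d : \det (M4 a b c d) = a * d - b * c.
Proof. by rewrite det2 !mxE. Qed.

Lemma valN1 (p : nat) (hp : (1 < p)%N) : nat_of_ord (-1 : 'Z_p) = p.-1.
Proof.
rewrite -[in RHS](Zp_cast hp) /=.
by rewrite (@modn_small 1) // subn1 /= modn_small.
Qed.

Lemma oddpred r : (0 < r)%N -> odd (2 ^ r).-1.
Proof.
move=> hr; have h2 : (0 < 2 ^ r)%N by rewrite expn_gt0.
have h := oddX 2 r; rewrite orbF -(prednK h2) /= in h.
case: r hr h2 h => // r' _ _ h; exact: negbFE h.
Qed.

Lemma sign_eq (B : 'M['Z_2]_2) (s : {perm nzvec}) :
  (forall v, val (s v) = val v *m B) -> sl2_sign B = odd_perm s.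
Proof.
move=> Hs; rewrite /sl2_sign; case: pickP => [s' /forallP Hs'|H0].
  congr odd_perm; apply/permP => v; apply: val_inj; rewrite Hs; exact/eqP.
have := H0 s; rewrite (introT forallP) // => v; by rewrite Hs.
Qed.

Lemma R2_neq0 x y : (x != 0) || (y != 0) -> R2 x y != 0.
Proof.
move=> h; apply/eqP => E; move: h.
have h1 := congr1 (fun M : 'rV['Z_2]_2 => M 0 0) E.
have h2 := congr1 (fun M : 'rV['Z_2]_2 => M 0 1) E.
by rewrite /= !mxE /= in h1 h2; rewrite h1 h2 eqxx.
Qed.

Definition e1 : nzvec := exist _ (R2 1 0) (R2_neq0 1 0 isT).
Definition e2 : nzvec := exist _ (R2 0 1) (R2_neq0 0 1 isT).
Definition e3 : nzvec := exist _ (R2 1 1) (R2_neq0 1 1 isT).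

Lemma R2inj x y x' y' : R2 x y = R2 x' y' -> x = x' /\ y = y'.
Proof.
move=> E.
have h1 := congr1 (fun M : 'rV['Z_2]_2 => M 0 0) E.
have h2 := congr1 (fun M : 'rV['Z_2]_2 => M 0 1) E.
by rewrite /= !mxE /= in h1 h2.
Qed.

Lemma e12 : e1 != e2.
Proof. apply/eqP => /(congr1 val) /R2inj [] /(congr1 val). by []. Qed.
Lemma e13 : e1 != e3.
Proof. apply/eqP => /(congr1 val) /R2inj [] _ /(congr1 val). by []. Qed.
Lemma e23 : e2 != e3.
Proof. apply/eqP => /(congr1 val) /R2inj [] /(congr1 val). by []. Qed.

Lemma nz_cases (v : nzvec) : v = e1 \/ v = e2 \/ v = e3.
Proof.
case: v => w hw.
suff: w = R2 1 0 \/ w = R2 0 1 \/ w = R2 1 1.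
  by case=> [E|[E|E]]; [left|right;left|right;right]; apply: val_inj.
move: hw; rewrite [w]rowE2.
case: (zcases (w 0 0)) => ->; case: (zcases (w 0 1)) => -> hw; auto.
exfalso; move/eqP: hw; apply; apply/rowP => j; rewrite !mxE; by case: (j == 0).
Qed.

Ltac dne := by rewrite ?e12 ?e13 ?e23 // eq_sym ?e12 ?e13 ?e23.
Ltac vclose := rewrite /= R2M4; congr R2; apply: val_inj; by [].

Lemma signT1 : sl2_sign (M4 0 1 1 0) = true.
Proof.
rewrite (@sign_eq _ (tperm e1 e2)) ?odd_tperm ?e12 // => v.
case: (nz_cases v) => [->|[->|->]].
- rewrite tpermL; vclose.
- rewrite tpermR; vclose.
- rewrite tpermD; [vclose|dne|dne].
Qed.

Lemma signT2 : sl2_sign (M4 1 1 0 1) = true.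
Proof.
rewrite (@sign_eq _ (tperm e1 e3)) ?odd_tperm ?e13 // => v.
case: (nz_cases v) => [->|[->|->]].
- rewrite tpermL; vclose.
- rewrite tpermD; [vclose|dne|dne].
- rewrite tpermR; vclose.
Qed.

Lemma signT3 : sl2_sign (M4 1 0 1 1) = true.
Proof.
rewrite (@sign_eq _ (tperm e2 e3)) ?odd_tperm ?e23 // => v.
case: (nz_cases v) => [->|[->|->]].
- rewrite tpermD; [vclose|dne|dne].
- rewrite tpermL; vclose.
- rewrite tpermR; vclose.
Qed.

Lemma signG : sl2_sign (M4 0 1 1 1) = false.
Proof.
rewrite (@sign_eq _ (tperm e1 e2 * tperm e1 e3)) ?odd_permM ?odd_tperm ?e12 ?e13 // => v.
case: (nz_cases v) => [->|[->|->]]; rewrite permM.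
- rewrite (tpermL e1 e2) tpermD; [vclose|dne|dne].
- rewrite (tpermR e1 e2) tpermL; vclose.
- rewrite (@tpermD _ e1 e2 e3); [rewrite tpermR; vclose|dne|dne].
Qed.

Lemma M4M a b c d a' b' c' d' : M4 a b c d *m M4 a' b' c' d' =
  M4 (a*a' + b*c') (a*b' + b*d') (c*a' + d*c') (c*b' + d*d').
Proof.
apply/matrixP => i j; rewrite !mxE big_ord_recl big_ord1 !mxE.
by case: i => [[|[|]]] //= Hi; case: j => [[|[|]]].
Qed.

Lemma M4one : (1%:M : 'M['Z_2]_2) = M4 1 0 0 1.
Proof.
apply/matrixP => i j; rewrite !mxE.
by case: i => [[|[|]]] //= Hi; case: j => [[|[|]]].
Qed.

Ltac mclose := rewrite ?M4M ?M4one; congr M4; apply: val_inj; by [].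

Definition gg := M4 0 1 1 1.
Definition gg2 := M4 1 1 1 0.

Lemma ggsq : gg *m gg = gg2. Proof. rewrite /gg /gg2; mclose. Qed.
Lemma gg3 : gg2 *m gg = 1%:M. Proof. rewrite /gg /gg2; mclose. Qed.
Lemma gg2E : gg2 = gg + 1%:M.
Proof. rewrite /gg /gg2 M4one; apply/matrixP => i j; rewrite !mxE.
by case: i => [[|[|]]] //= Hi; case: j => [[|[|]]] //= Hj; apply: val_inj. Qed.

Lemma red2id (A : 'M['Z_2]_2) : red2 A = A.
Proof. apply/matrixP => i j; rewrite !mxE; exact: natr_Zp. Qed.

Lemma classify (A : 'M['Z_2]_2) : in_SL2plus A -> A = 1%:M \/ A = gg \/ A = gg2.
Proof.
rewrite M4one /gg /gg2 /in_SL2plus red2id [A]M4E detM4.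
case: (zcases (A 0 0)) => ->; case: (zcases (A 0 1)) => ->;
case: (zcases (A 1 0)) => ->; case: (zcases (A 1 1)) => ->;
rewrite ?signT1 ?signT2 ?signT3 /=; auto; by [].
Qed.

Lemma oppZ2 (v : 'cV['Z_2]_2) : - v = v.
Proof. apply/matrixP => i j; rewrite !mxE; case: (zcases (v i j)) => ->; by apply: val_inj. Qed.

Lemma r1case (f : 'M['Z_2]_2 -> 'cV['Z_2]_2) :
  cocycle (@in_SL2plus 2) f -> coboundary (@in_SL2plus 2) f.
Proof.
move=> Hf.
have H1 : in_SL2plus (1%:M : 'M['Z_2]_2).
  rewrite /in_SL2plus red2id M4one detM4 (@sign_eq _ 1) ?odd_perm1 //; last first.
    by move=> v; rewrite perm1 -M4one mulmx1.
have Hg : in_SL2plus gg by rewrite /in_SL2plus red2id detM4 signG.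
have f1 : f 1%:M = 0.
  have := Hf _ _ H1 H1; rewrite !mul1mx => h.
  by apply: (@addrI _ (f 1%:M)); rewrite addr0 -h.
exists (gg *m f gg) => A /classify [->|[->|->]].
- by rewrite mul1mx subrr f1.
- by rewrite mulmxA ggsq gg2E mulmxDl mul1mx (addrC (gg *m f gg)) addrK.
- by rewrite -{1}ggsq Hf // mulmxA gg3 mul1mx oppZ2.
Qed.

Lemma zin (n : nat) (hn : (1 < n)%N) (hodd : odd n.-1) :
  in_SL2plus ((-1)%:M : 'M['Z_n]_2).
Proof.
rewrite /in_SL2plus det_scalar sqrrN expr1n eqxx /=.
have -> : red2 ((-1)%:M : 'M['Z_n]_2) = 1%:M.
  apply/matrixP => i j; rewrite !mxE; case: (i == j).
    rewrite !mulr1n valN1 //; apply: val_inj; rewrite /= Zp_nat /= modn2 hodd. by [].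
  by rewrite !mulr0n.
rewrite (@sign_eq _ 1) ?odd_perm1 // => v; by rewrite perm1 mulmx1.
Qed.

Theorem lemma4p6 (r : nat) (hr : (0 < r)%N)
  (f : 'M['Z_(2 ^ r)]_2 -> 'cV['Z_(2 ^ r)]_2) :
  cocycle (@in_SL2plus (2 ^ r)) f ->
  coboundary (@in_SL2plus (2 ^ r)) (fun A => f A *+ (2 ^ r.-1)).
Proof.
case: r hr f => [//|[|r]] _ f Hf.
  have [m Hm] := @r1case f Hf.
  by exists m => A HA; rewrite Hm.
have hn : (1 < 2 ^ r.+2)%N by rewrite -{1}(expn0 2) ltn_exp2l.
have Hz := @zin _ hn (@oddpred r.+2 (ltn0Sn _)).
set z := ((-1)%:M : 'M['Z_(2 ^ r.+2)]_2) in Hz.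
have key : forall A, in_SL2plus A -> f A *+ 2 = f z - A *m f z.
  move=> A HA; have e1 := Hf _ _ Hz HA; have e2 := Hf _ _ HA Hz.
  rewrite scalar_mxC e1 mul_scalar_mx scaleN1r in e2.
  rewrite {1}(_ : f z = f A + A *m f z + f A); last by rewrite -e2 subrK.
  by rewrite mulr2n [f A + A *m f z + f A]addrAC addrK.
exists (- f z *+ 2 ^ r) => A HA.
rewrite /= (expnS 2 r) mulrnA key // raddfMn raddfN /= mulrnBl !mulNrn opprK [RHS]addrC.
by [].
Qed.
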